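(* Let $A$ be a band operator on $\ell^2(\mathbb{Z})$ satisfying $\mathcal{C}(A)=\mathcal{C}(A|_{\mathbb{N}})$. Then (a) $A$ is self-contained; (b) $\mathcal{C}(A^* )=\mathcal{C}(A^*|_{\mathbb{N}})$; (c) $\mathcal{C}(A)=\mathcal{C}(A|_{k..})$ for all $k\in\mathbb{Z}$. Moreover, (d) a band operator $B$ on $\ell^2(\mathbb{Z})$ is self-contained if and only if $\mathcal{C}(B)=\mathcal{C}(B|_{\mathbb{N}})\cup\mathcal{C}(B|_{-\mathbb{N}})$.
   Context: $\mathbb{N}=\{1,2,\dots\}$, $k..:=\{n\in\mathbb{Z}:n\ge k\}$, $a..b:=\{n\in\mathbb{Z}:a\le n\le b\}$. A band operator with band-width $w$ on $\ell^2(\mathbb{Z})$ is a bounded operator whose matrix satisfies $A_{ij}=0$ for $|i-j|>w$. For $\mathbb{J}\subseteq\mathbb{Z}$, $A|_{\mathbb{J}}:\ell^2(\mathbb{J})\to\ell^2(\mathbb{Z})$ is the restriction, with matrix $(A_{ij})_{i\in\mathbb{Z},j\in\mathbb{J}}$. For $N\in\mathbb{N}$, an $N$-column submatrix of an operator $B$ (with column index set $\mathbb{J}$) is a matrix $C=(C_{ij})_{i\in1-w..N+w,\,j\in1..N}$ with $C_{ij}=B_{k+i,k+j}$ for some $k$ with $k+1..k+N\subseteq\mathbb{J}$; $\mathcal{C}(B)$ is the set of all such matrices over all $N$. $A$ is self-contained if every $C\in\mathcal{C}(A)$ appears infinitely often in $A$, i.e. for infinitely many $k\in\mathbb{Z}$.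 *)

(* Defs.v *)
From HB Require Import structures.
From mathcomp Require Import all_boot all_order all_algebra.
From mathcomp Require Import complex.
From mathcomp Require Import boolp classical_sets cardinality reals.
Unset Printing Implicit Defensive.
Import Order.TTheory GRing.Theory Num.Theory.
Local Open Scope ring_scope.

(* A bi-infinite matrix on l^2(Z) with complex entries: (i,j) |-> A_{ij}. *)
Definition zmat (R : realType) := int -> int -> R[i].

(* For a band matrix, boundedness of the
   operator on l^2(Z) is equivalent to uniform boundedness of the entries. *)
Definition band_operator {R : realType} (w : nat) (A : zmat R) : Prop :=
  (forall i j : int, (w%:Z < `|i - j|)%R -> A i j = 0) /\
  exists c : R, forall i j : int, `|A i j| <= (c%:C)%C.

Definition adjoint {R : realType} (A : zmat R) : zmat R :=
  fun i j => conjc (A j i).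

(* The N-column submatrix of B at offset k, with rows indexed by
   1-w .. N+w (stored as r = 0 .. N+2w-1, i = r + 1 - w) and columns
   1 .. N (stored as c = 0 .. N-1, j = c + 1):
   C_{ij} = B_{k+i, k+j}. *)
Definition subm {R : realType} (w : nat) (B : zmat R) (N : nat) (k : int)
  : 'M[R[i]]_(N + w + w, N) :=
  \matrix_(r < N + w + w, c < N)
     B (k + (r%:Z + 1 - w%:Z)) (k + (c%:Z + 1)).

Definition inC {R : realType} (w : nat) (B : zmat R) (J : set int)
  (N : nat) (M : 'M[R[i]]_(N + w + w, N)) : Prop :=
  (0 < N)%N /\
  exists k : int, (forall j : nat, (1 <= j <= N)%N -> J (k + j%:Z)) /\
                  M = subm w B N k.

Definition Zall : set int := setT.
Definition natpos : set int := [set n : int | (1 <= n)%R].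
Definition natneg : set int := [set n : int | (n <= -1)%R].
Definition from (k : int) : set int := [set n : int | (k <= n)%R].

Definition Ceq {R : realType} (w : nat) (B : zmat R) (J1 J2 : set int) : Prop :=
  forall (N : nat) (M : 'M[R[i]]_(N + w + w, N)),
    inC w B J1 N M <-> inC w B J2 N M.

Definition Ceq_union {R : realType} (w : nat) (B : zmat R) : Prop :=
  forall (N : nat) (M : 'M[R[i]]_(N + w + w, N)),
    inC w B Zall N M <-> (inC w B natpos N M \/ inC w B natneg N M).

Definition self_contained {R : realType} (w : nat) (A : zmat R) : Prop :=
  forall (N : nat) (M : 'M[R[i]]_(N + w + w, N)),
    inC w A Zall N M -> infinite_set [set k : int | M = subm w A N k].

(* Main.v *)
Require Import Defs.
From HB Require Import structures.
From mathcomp Require Import all_boot all_order all_algebra.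
From mathcomp Require Import complex.
From mathcomp Require Import boolp classical_sets cardinality reals.
From mathcomp Require Import zify.
Import Order.TTheory GRing.Theory Num.Theory.
Local Open Scope ring_scope.
Local Open Scope classical_set_scope.
Lemma bounded_of_finite (S : set int) : finite_set S ->
  exists b : nat, forall x, S x -> (`|x| <= b)%N.
Proof.
move=> /finite_fsetP[X ->]; exists (\max_(x <- finmap.enum_fset X) `|x|)%N => x Xx.
apply: (@leq_bigmax_seq _ _ xpredT (fun x : int => `|x|%N) x) => //.
Qed.
Lemma unbounded_infinite (S : set int) :
  (forall L : nat, exists x, S x /\ (L <= `|x|)%N) -> infinite_set S.
Proof.
move=> H /bounded_of_finite[b Hb]; have [x [Sx Lx]] := H b.+1.
by have := Hb _ Sx; lia.
Qed.
Lemma infinite_far (S : set int) (N : nat) : infinite_set S ->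
  exists x, S x /\ (0 <= x \/ x <= - N%:Z - 1)%R.
Proof.
move=> Hinf; apply: contra_notP Hinf => H.
apply: (@sub_finite_set _ _ ((fun k : nat => - (k%:Z + 1)) @` `I_N)); last first.
  by apply: finite_image.
move=> x Sx; have Hx : (- N%:Z <= x <= -1)%R.
  apply/andP; split; apply/negP => /negP; rewrite -ltNge => Hc; apply: H; exists x; split => //; lia.
exists (absz (x + 1)) => /=; [rewrite /mkset; lia | lia].
Qed.

Lemma eqB {R : realType} (B : zmat R) x1 y1 x2 y2 x1' y1' x2' y2' :
  x1 = x1' -> y1 = y1' -> x2 = x2' -> y2 = y2' -> B x1 y1 = B x2 y2 -> B x1' y1' = B x2' y2'.
Proof. by move=> -> -> -> ->. Qed.

Lemma subm_shift {R : realType} (w : nat) (B : zmat R) (N' N d : nat) (K q : int) :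
  (d + N <= N')%N -> subm w B N' K = subm w B N' q ->
  subm w B N (K + d%:Z) = subm w B N (q + d%:Z).
Proof.
move=> hN E; apply/matrixP => r c; rewrite !mxE.
have hr : (r + d < N' + w + w)%N by have := ltn_ord r; lia.
have hc : (c + d < N')%N by have := ltn_ord c; lia.
have := congr1 (fun M => fun_of_matrix M (Ordinal hr) (Ordinal hc)) E; rewrite !mxE /=.
apply: eqB; lia.
Qed.

Lemma subm_adj {R : realType} (w : nat) (A : zmat R) (N : nat) (p q : int) :
  subm w A (N + w + w) (p - w%:Z) = subm w A (N + w + w) q ->
  subm w (adjoint A) N p = subm w (adjoint A) N (q + w%:Z).
Proof.
move=> E; apply/matrixP => r c; rewrite !mxE /adjoint; congr conjc.
have hr : (c + w + w < N + w + w + w + w)%N by have := ltn_ord c; lia.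
have hc : (r < N + w + w)%N by have := ltn_ord r; lia.
have := congr1 (fun M => fun_of_matrix M (Ordinal hr) (Ordinal hc)) E; rewrite !mxE /=.
apply: eqB; lia.
Qed.

Lemma far_pos {R : realType} (w : nat) (A : zmat R) :
  Ceq w A Zall natpos -> forall (N : nat) (k0 : int) (L : nat), (0 < N)%N ->
  exists q : int, (0 <= q)%R /\ subm w A N k0 = subm w A N (q + L%:Z).
Proof.
move=> H N k0 L hN.
have : inC w A Zall (N + L) (subm w A (N + L) (k0 - L%:Z)).
  by split; [lia | exists (k0 - L%:Z)].
move/H => [_ [q [Hq E]]]; exists q; split; first by have := Hq 1%N; rewrite /natpos /=; lia.
have := @subm_shift _ _ _ _ N L _ _ _ E; rewrite subrK; apply; lia.
Qed.

Theorem lemma4p4 (R : realType) (w : nat) (A : zmat R) :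
  band_operator w A ->
  Ceq w A Zall natpos ->
  [/\ self_contained w A,
      Ceq w (adjoint A) Zall natpos,
      (forall k : int, Ceq w A Zall (from k)) &
      (forall (v : nat) (B : zmat R), band_operator v B ->
         (self_contained v B <-> Ceq_union v B))].
Proof.
move=> _ H; split.
- move=> N M [hN [k0 [_ ->]]]; apply: unbounded_infinite => L.
  have [q [hq E]] := @far_pos _ _ _ H N k0 L hN.
  exists (q + L%:Z); split; [exact: E | lia].
- move=> N M; split; last first.
    by move=> [hN [k [_ ->]]]; split => //; exists k.
  move=> [hN [p [_ ->]]].
  have : inC w A Zall (N + w + w) (subm w A (N + w + w) (p - w%:Z)).
    by split; [lia | exists (p - w%:Z)].
  move/H => [_ [q [Hq E]]]; split => //; exists (q + w%:Z); split; last exact: subm_adj.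
  have := Hq 1%N; rewrite /natpos /= => h j hj; lia.
- move=> k N M; split; last first.
    by move=> [hN [k1 [_ ->]]]; split => //; exists k1.
  move=> [hN [k0 [_ ->]]].
  have [q [hq E]] := @far_pos _ _ _ H N k0 (absz k) hN.
  split => //; exists (q + (absz k)%:Z); split => //.
  move=> j hj; rewrite /from /=; lia.
- move=> v B _; split.
  + move=> SC N M; split; last first.
      by case=> -[hN [k1 [_ ->]]]; split => //; exists k1.
    move=> HM; have := SC N M HM; move: HM => [hN _].
    move/(@infinite_far _ N) => [x [Ex Hx]].
    case: Hx => Hx; [left | right]; split => //; exists x; split => // j hj;
      rewrite /natpos /natneg /=; lia.
  + move=> U N M [hN [k0 [_ ->]]]; apply: unbounded_infinite => L.
    have : inC v B Zall (N + L + L) (subm v B (N + L + L) (k0 - L%:Z)).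
      by split; [lia | exists (k0 - L%:Z)].
    move/U => [] [_ [q [Hq E]]].
    * exists (q + L%:Z); split.
        by have := @subm_shift _ _ _ _ N L _ _ _ E; rewrite subrK; apply; lia.
      by have := Hq 1%N; rewrite /natpos /=; lia.
    * exists (q + L%:Z); split.
        by have := @subm_shift _ _ _ _ N L _ _ _ E; rewrite subrK; apply; lia.
      have := Hq (N + L + L)%N; rewrite /natneg /=.
      have h1 : (1 <= N + L + L <= N + L + L)%N by lia.
      move/(_ h1); lia.
Qed.
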